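(* Let $M$ be an $\mathbf{FB}$-module and $a:\mathrm{Sym}(\mathbf V)\otimes M\to\mathbf V\otimes M$ a map, and write, for $B\subseteq S$ and $x\in M(S\setminus B)$, $$a(t^B\otimes x)=\sum_{i\in B}t^i\otimes\omega^{S\setminus\{i\}}_{B\setminus\{i\}}(x)+\sum_{i\in S\setminus B}t^i\otimes\alpha^S_{i,B}(x),$$ with $\omega^T_C:M(T\setminus C)\to M(T)$ and $\alpha^S_{i,B}:M(S\setminus B)\to M(S\setminus\{i\})$. Then $a$ defines a representation of $\underline W(\mathbf V)$ if and only if, for every finite set $S$ and disjoint subsets $A,B\subseteq S$: (a) $\alpha$ and $\omega$ commute with themselves and each other; (b) for $j\in B$ and $i\in S\setminus(A\cup B)$, $\alpha^{S\setminus\{i\}}_{j,A}\circ\alpha^{S\setminus A}_{i,B}=\alpha^{S\setminus\{j\}}_{i,(A\cup B)\setminus\{j\}}$; (c) for $j\in B$, $\alpha^S_{j,A}\circ\omega^{S\setminus A}_B=\omega^{S\setminus\{j\}}_{(A\cup B)\setminus\{j\}}$.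
   Context: $k$ is a commutative ring; $\mathbf{FB}$-modules are functors from finite sets and bijections to $k$-modules, $(M\otimes N)(S)=\bigoplus_{T\subseteq S}M(T)\otimes N(S\setminus T)$, symmetry $\tau$. $\mathbf V$ is $k$ on singletons, $0$ otherwise, basis $t^i$. $\mathrm{Sym}(\mathbf V)=\bigoplus_n\mathrm{Sym}^n(\mathbf V)$, $\mathrm{Sym}^n(\mathbf V)(S)$ free with basis $t^S$ if $|S|=n$, else $0$. $m(t^A\otimes t^B)=t^{A\cup B}$; $\Delta(t^B)=\sum_{j\in B}t^j\otimes t^{B\setminus\{j\}}\in\mathbf V\otimes\mathrm{Sym}(\mathbf V)$. Representation of $\underline W(\mathbf V)$: $[a_1,a_2]=a'-a''$, where $a_2=\mathrm{id}\otimes a$, $a_1=\tau(\mathrm{id}\otimes a)\tau$, $[a_1,a_2]=a_1a_2-a_2a_1$ as maps $\mathrm{Sym}\otimes\mathrm{Sym}\otimes M\to\mathbf V\otimes\mathbf V\otimes M$, $a'=(\mathrm{id}_{\mathbf V}\otimes a)(\mathrm{id}_{\mathbf V}\otimes m\otimes\mathrm{id})(\tau\otimes\mathrm{id}\otimes\mathrm{id})(\mathrm{id}\otimes\Delta\otimes\mathrm{id})$, $a''=\tau a'\tau$. Operations: $\alpha$ is the family $\alpha^S_{\{i\},B}=\alpha^S_{i,B}$ and $\omega$ the family $\omega^S_{\emptyset,B}=\omega^S_B$ of maps $M(S\setminus B)\to M(S\setminus A)$ indexed by disjoint subsets, natural in bijections. Families $\phi,\psi$ commute if for every finite $S$ and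 pairwise disjoint $A,B,C,D\subseteq S$ for which the maps are defined, $\psi^{S\setminus A}_{C,D}\circ\phi^{S\setminus D}_{A,B}=\phi^{S\setminus C}_{A,B}\circ\psi^{S\setminus B}_{C,D}$ (self-commuting: $\psi=\phi$). *)

(* Defs.v *)
From HB Require Import structures.
From mathcomp Require Import all_boot all_algebra.
From mathcomp Require Import finmap.



Unset Printing Implicit Defensive.

Import GRing.Theory.
Local Open Scope fset_scope.
Local Open Scope ring_scope.

(* Finite sets are finite sets of labels [{fset nat}] (an equivalent
   skeleton-free model of the category FB of finite sets and bijections). *)
Notation fset := {fset nat}.

Section FB.
Variable k : comPzRingType.
Variable M : fset -> lmodType k.

(* Identification M X = M Y along an equality of finite sets X = Y
   (junk value 0 if X <> Y; only ever used when X = Y). *)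
Definition castM {X Y : fset} (x : M X) : M Y :=
  match X =P Y with
  | ReflectT e => eq_rect X (fun Z => M Z : Type) x Y e
  | ReflectF _ => 0
  end.

Definition bij_on (f : nat -> nat) (X Y : fset) : Prop :=
  {in X &, injective f} /\ f @` X = Y.

(* actM X Y f : M X -> M Y is the action M(f) of a bijection f : X -> Y
   (values for non-bijections are irrelevant).  FB-module axioms: *)
Definition is_FBmodule (actM : forall (X Y : fset), (nat -> nat) -> M X -> M Y) : Prop :=
  [/\ (forall X Y f, bij_on f X Y ->
         forall (c : k) (x y : M X), actM X Y f (c *: x + y) = c *: actM X Y f x + actM X Y f y),
      (forall X Y f g, bij_on f X Y -> {in X, f =1 g} -> forall x, actM X Y f x = actM X Y g x),
      (forall X (x : M X), actM X X id x = x) &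
      (forall X Y Z f g, bij_on f X Y -> bij_on g Y Z ->
         forall x, actM Y Z g (actM X Y f x) = actM X Z (g \o f) x)].

(* A map a : Sym(V) (x) M -> V (x) M.  Since
     (Sym(V) (x) M)(S) = (+)_{B <= S} k t^B (x) M(S \ B)   and
     (V (x) M)(S)      = (+)_{i in S} k t^i (x) M(S \ {i}),
   a k-linear map is given by its matrix coefficients:
     a S B i x := the t^i-component of a(t^B (x) x), for B <= S, i in S,
   so that a(t^B (x) x) = sum_{i in S} t^i (x) a S B i x. *)
Definition coefmap := forall (S B : fset) (i : nat), M (S `\` B) -> M (S `\ i).

Definition is_FBmap (actM : forall (X Y : fset), (nat -> nat) -> M X -> M Y)
    (a : coefmap) : Prop :=
  (forall S B i, B `<=` S -> i \in S ->
     forall (c : k) (x y : M (S `\` B)),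
       a S B i (c *: x + y) = c *: a S B i x + a S B i y) /\
  (forall S T f, bij_on f S T -> forall B i, B `<=` S -> i \in S ->
     forall x : M (S `\` B),
       a T (f @` B) (f i) (actM (S `\` B) (T `\` f @` B) f x)
       = actM (S `\ i) (T `\ f i) f (a S B i x)).

(* Components of the maps Sym (x) Sym (x) M -> V (x) V (x) M.
   Input: generator t^A (x) t^B (x) x with A, B disjoint subsets of S and
   x in M((S\A)\B).  Output: the t^i (x) t^j component (i <> j in S), an
   element of M((S\{i})\{j}).  These are the literal evaluations of the
   composites defining a1 a2, a2 a1, a' and a'' = tau a' tau, with
   a2 = id (x) a, a1 = tau (id (x) a) tau,
   a' = (id_V (x) a)(id_V (x) m (x) id)(tau (x) id (x) id)(id (x) Delta (x) id),
   m(t^A (x) t^B) = t^(A u B), Delta(t^B) = sum_{j in B} t^j (x) t^(B\{j}). *)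
Section Components.
Variable a : coefmap.
Context {S A B : fset}.
Variables (x : M ((S `\` A) `\` B)) (i j : nat).

(* a1 a2 : t^A t^B x |-> sum_{j in S\A} sum_{i in S\{j}} t^i t^j a_{S\j}(t^A (x) a_{S\A}(t^B x)_j)_i *)
Definition a1a2_comp : M ((S `\ i) `\ j) :=
  if j \notin A then
    castM (a (S `\ j) A i (castM (a (S `\` A) B j x)))
  else 0.

(* a2 a1 : t^A t^B x |-> sum_{i in S\B} sum_{j in S\{i}} t^i t^j a_{S\i}(t^B (x) a_{S\B}(t^A x)_i)_j *)
Definition a2a1_comp : M ((S `\ i) `\ j) :=
  if i \notin B then
    a (S `\ i) B j (castM (a (S `\` B) A i (castM x)))
  else 0.

(* a' : t^A t^B x |-> sum_{p in B} t^p (x) a_{S\p}(t^((A u B)\p) (x) x) *)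
Definition a'_comp : M ((S `\ i) `\ j) :=
  if i \in B then a (S `\ i) ((A `|` B) `\ i) j (castM x) else 0.

(* a'' = tau a' tau : t^A t^B x |-> tau (sum_{p in A} t^p (x) a_{S\p}(t^((B u A)\p) (x) x)) *)
Definition a''_comp : M ((S `\ i) `\ j) :=
  if j \in A then castM (a (S `\ j) ((B `|` A) `\ j) i (castM x)) else 0.
End Components.

(* a defines a representation of W(V):  [a1, a2] = a' - a''. *)
Definition is_Wrep (a : coefmap) : Prop :=
  forall (S A B : fset), A `<=` S -> B `<=` S -> A `&` B = fset0 ->
  forall (x : M ((S `\` A) `\` B)) (i j : nat), i \in S -> j \in S -> i != j ->
    a1a2_comp a x i j - a2a1_comp a x i j = a'_comp a x i j - a''_comp a x i j.

(* Families of maps phi^S_{A,B} : M(S \ B) -> M(S \ A), indexed by disjoint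
   subsets A, B of S, defined only for those A satisfying [dom]. *)
Definition family := forall (S A B : fset), M (S `\` B) -> M (S `\` A).

Definition commute (phi : family) (dphi : fset -> bool)
                   (psi : family) (dpsi : fset -> bool) : Prop :=
  forall (S A B C D : fset),
    A `<=` S -> B `<=` S -> C `<=` S -> D `<=` S ->
    A `&` B = fset0 -> A `&` C = fset0 -> A `&` D = fset0 ->
    B `&` C = fset0 -> B `&` D = fset0 -> C `&` D = fset0 ->
    dphi A -> dpsi C ->
    forall x : M ((S `\` D) `\` B),
      psi (S `\` A) C D (castM (phi (S `\` D) A B x))
      = castM (phi (S `\` C) A B (castM (psi (S `\` B) C D (castM x)))).

Definition alpha_type := forall (S : fset) (i : nat) (B : fset), M (S `\` B) -> M (S `\ i).
Definition omega_type := forall (T C : fset), M (T `\` C) -> M T.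

(* alpha as the family alpha^S_{{i},B}: defined for singletons A = {i}. *)
Definition alpha_fam (alpha : alpha_type) : family :=
  fun S A B x => castM (alpha S (head 0%N (enum_fset A)) B x).
Definition alpha_dom (A : fset) : bool := #|` A| == 1%N.

(* omega as the family omega^S_{emptyset,B}: defined for A = emptyset. *)
Definition omega_fam (omega : omega_type) : family :=
  fun S A B x => castM (omega S B x).
Definition omega_dom (A : fset) : bool := A == fset0.

Definition decomposes (a : coefmap) (alpha : alpha_type) (omega : omega_type) : Prop :=
  forall (S B : fset) (i : nat), B `<=` S -> i \in S -> forall x : M (S `\` B),
    a S B i x = if i \in B then omega (S `\ i) (B `\ i) (castM x)
                else alpha S i B x.

Definition cond_a (alpha : alpha_type) (omega : omega_type) : Prop :=
  [/\ commute (alpha_fam alpha) alpha_dom (alpha_fam alpha) alpha_dom,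
      commute (omega_fam omega) omega_dom (omega_fam omega) omega_dom &
      commute (alpha_fam alpha) alpha_dom (omega_fam omega) omega_dom].

Definition cond_b (alpha : alpha_type) : Prop :=
  forall (S A B : fset), A `<=` S -> B `<=` S -> A `&` B = fset0 ->
  forall (j i : nat), j \in B -> i \in S `\` (A `|` B) ->
  forall x : M ((S `\` A) `\` B),
    alpha (S `\ i) j A (castM (alpha (S `\` A) i B x))
    = castM (alpha (S `\ j) i ((A `|` B) `\ j) (castM x)).

Definition cond_c (alpha : alpha_type) (omega : omega_type) : Prop :=
  forall (S A B : fset), A `<=` S -> B `<=` S -> A `&` B = fset0 ->
  forall (j : nat), j \in B ->
  forall x : M ((S `\` A) `\` B),
    alpha S j A (omega (S `\` A) B x)
    = omega (S `\ j) ((A `|` B) `\ j) (castM x).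

End FB.

Arguments castM {k M X Y}.
Arguments coefmap {k} M.
Arguments alpha_type {k} M.
Arguments omega_type {k} M.
Arguments family {k} M.
Arguments is_FBmodule {k M}.
Arguments is_FBmap {k M}.
Arguments is_Wrep {k M}.
Arguments decomposes {k M}.
Arguments cond_a {k M}.
Arguments cond_b {k M}.
Arguments cond_c {k M}.
Arguments commute {k M}.
Arguments alpha_fam {k M}.
Arguments omega_fam {k M}.

(* Main.v *)
Require Import Defs.
From HB Require Import structures.
From mathcomp Require Import all_boot all_algebra.
From mathcomp Require Import finmap.
Import GRing.Theory.
Local Open Scope fset_scope.
Local Open Scope ring_scope.

Lemma hd1 (a : nat) : head 0%N (enum_fset [fset a]) = a.
Proof. by rewrite enum_fsetE /= enum_fset1. Qed.

Lemma subB (A S : {fset nat}) : A `<=` S -> forall z, (z \in A) ==> (z \in S).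
Proof. by move/fsubsetP=> h z; apply/implyP/h. Qed.
Lemma disB (A B : {fset nat}) : A `&` B = fset0 -> forall z, ~~ ((z \in A) && (z \in B)).
Proof. by move=> h z; rewrite -in_fsetI h inE. Qed.

Arguments subB {A S}.
Arguments disB {A B}.

Ltac spec_at z :=
  repeat match goal with H : forall w : _, _ |- _ => move: (H z); clear H end.

Ltac rw_pts := repeat match goal with
 | H : is_true (?p \in ?X) |- context [?p \in ?X] => rewrite H
 | H : is_true (~~ (?p \in ?X)) |- context [?p \in ?X] => rewrite (negbTE H)
 | H : is_true (?p != ?q) |- context [?p == ?q] => rewrite (negbTE H)
 | H : is_true (?p != ?q) |- context [?q == ?p] =>
     rewrite (_ : (q == p) = false); [|by rewrite eq_sym (negbTE H)]
 end.

Ltac elim_eqs :=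
  (repeat (rewrite ?eqxx /=; rw_pts; match goal with
     |- context [?p == ?q :> nat] => let e := fresh "e" in case: (eqVneq p q) => [e|_]; [subst|] end));
  rewrite ?eqxx /=; rw_pts.

Ltac brute :=
  repeat match goal with |- context [?p \in ?X] => case: (p \in X) end.

Ltac bfinish := rewrite /= ?implybT ?implyTb //=;
  try (match goal with H1 : is_true ?b, H2 : is_true (~~ ?b) |- _ => by rewrite H1 in H2 end);
  by do ![move=> /= ?] .

Ltac solve_sets :=
  lazymatch goal with
  | |- is_true (fsubset _ _) => let z := fresh "z" in apply/fsubsetP; intro z; apply/implyP; spec_at z
  | |- context [?p \in _] => spec_at p
  | |- context [?p == _ :> nat] => spec_at p
  | |- @eq bool _ _ => idtac
  | |- is_true _ => idtac
  | |- @eq _ _ _ => let z := fresh "z" in apply/fsetP; intro z; spec_at z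
  end; rewrite ?inE; rw_pts; elim_eqs; rewrite ?inE; rw_pts; brute; bfinish.

Ltac norm_pts := repeat match goal with
 | H : is_true (?p \in fsetD _ _) |- _ => rewrite in_fsetD in H
 | H : is_true (?p \in fsetU _ _) |- _ => rewrite in_fsetU in H
 | H : is_true (~~ (?p \in fsetD _ _)) |- _ => rewrite in_fsetD in H
 | H : is_true (~~ (?p \in fsetU _ _)) |- _ => rewrite in_fsetU in H
 | H : is_true (?p \in [fset _]) |- _ => rewrite in_fset1 in H
 | H : is_true (~~ (?p \in [fset _])) |- _ => rewrite in_fset1 in H
 | H : is_true (_ && _) |- _ => case/andP: H => ? ?
 | H : is_true (~~ (_ || _)) |- _ => rewrite negb_or in H
 | H : is_true (~~ ~~ _) |- _ => rewrite negbK in H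
end.

Section Cast.
Variable k : comPzRingType.
Variable M : {fset nat} -> lmodType k.

Definition Tot := {X : {fset nat} & (M X : Type)}.
Definition E {X} (x : M X) : Tot := existT (fun Z => (M Z : Type)) X x.
Definition get (Y : {fset nat}) (p : Tot) : M Y := castM (projT2 p).

Lemma castM_id X (x : M X) : castM x = x.
Proof.
rewrite /castM; case: (X =P X) => [e|/(_ erefl)//].
by rewrite (eq_irrelevance e (erefl X)).
Qed.

Lemma E_inj X (x y : M X) : E x = E y -> x = y.
Proof. by move/(congr1 (get X)); rewrite /get /= !castM_id. Qed.

Lemma E_cast X Y (x : M X) : X = Y -> E (castM x : M Y) = E x.
Proof. by move=> e; subst; rewrite castM_id. Qed.

Definition Alpha (alpha : alpha_type M) S i B (p : Tot) : Tot := E (alpha S i B (get _ p)).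
Definition Omega (omega : omega_type M) T C (p : Tot) : Tot := E (omega T C (get _ p)).

Lemma E_alpha alpha S i B (y : M (S `\` B)) : E (alpha S i B y) = Alpha alpha S i B (E y).
Proof. by rewrite /Alpha /get /= castM_id. Qed.
Lemma E_omega omega T C (y : M (T `\` C)) : E (omega T C y) = Omega omega T C (E y).
Proof. by rewrite /Omega /get /= castM_id. Qed.

Lemma AlphaC alpha S S' i i' B B' p p' : S = S' -> i = i' -> B = B' -> p = p' ->
  Alpha alpha S i B p = Alpha alpha S' i' B' p'.
Proof. by move=> -> -> -> ->. Qed.
Lemma OmegaC omega T T' C C' p p' : T = T' -> C = C' -> p = p' ->
  Omega omega T C p = Omega omega T' C' p'.
Proof. by move=> -> -> ->. Qed.
End Cast.
Arguments E {k M X}.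
Arguments get {k M}.
Arguments Alpha {k M}.
Arguments Omega {k M}.

Lemma fresh (S : {fset nat}) : exists i, i \notin S.
Proof.
exists (\max_(x <- S) x).+1; apply/negP => h.
have := @leq_bigmax_seq _ (enum_fset S) xpredT (fun x => x) _ h isT.
by rewrite ltnn.
Qed.

Section Main.
Variable k : comPzRingType.
Variable M : {fset nat} -> lmodType k.
Variables (a : coefmap M) (alpha : alpha_type M) (omega : omega_type M).
Hypothesis dec : decomposes a alpha omega.

Lemma dec_in S B i (x : M (S `\` B)) : B `<=` S -> i \in S -> i \in B ->
  E (a S B i x) = Omega omega (S `\ i) (B `\ i) (E x).
Proof. by move=> hB hi hiB; rewrite dec // hiB E_omega E_cast //; solve_sets. Qed.
Lemma dec_out S B i (x : M (S `\` B)) : B `<=` S -> i \in S -> i \notin B ->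
  E (a S B i x) = Alpha alpha S i B (E x).
Proof. by move=> hB hi hiB; rewrite dec // (negbTE hiB) E_alpha. Qed.

Ltac push_E := repeat first
  [ rewrite E_cast; [|solve_sets]
  | rewrite dec_in; [|solve_sets|solve_sets|solve_sets]
  | rewrite dec_out; [|solve_sets|solve_sets|solve_sets]
  | rewrite E_alpha | rewrite E_omega ].
Ltac push_E_in H := repeat first
  [ rewrite E_cast in H; [|solve_sets]
  | rewrite dec_in in H; [|solve_sets|solve_sets|solve_sets]
  | rewrite dec_out in H; [|solve_sets|solve_sets|solve_sets]
  | rewrite E_alpha in H | rewrite E_omega in H ].
Ltac simpl_ifs_in H := repeat match type of H with
  | context [if ?b then _ else _] =>
     first [ rewrite (_ : b = true) in H; [|solve_sets]
           | rewrite (_ : b = false) in H; [|solve_sets] ]; simpl in H end.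
Ltac simpl_ifs := repeat match goal with
  | |- context [if ?b then _ else _] =>
     first [ rewrite (_ : b = true); [|solve_sets]
           | rewrite (_ : b = false); [|solve_sets] ]; simpl end.
Ltac tree_eq := solve [repeat first [apply: AlphaC | apply: OmegaC]; (reflexivity || solve_sets)].
Ltac use H := first
  [ etransitivity; [|etransitivity; [exact H|]]; tree_eq
  | etransitivity; [|etransitivity; [exact (esym H)|]]; tree_eq ].
Ltac prep := repeat match goal with
  | H : is_true (fsubset _ _) |- _ => move: (subB H) => ?; clear H
  | H : fsetI _ _ = fset0 |- _ => move: (disB H) => ?; clear H
  end; norm_pts.
Ltac unf := rewrite /a1a2_comp /a2a1_comp /a'_comp /a''_comp.

Ltac feed H := repeat match type of H with
  | ?P -> _ => lazymatch P with is_true _ => idtac | _ = _ => idtac end; let h := fresh "h" in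
      have h : P; [ first [ solve [rewrite /alpha_dom /omega_dom ?cardfs1 ?eqxx //] | solve_sets ] | specialize (H h) ]
  end.

Lemma to_b : is_Wrep a -> cond_b alpha.
Proof.
move=> W S A B hAS hBS dAB j i hjB hiC x.
move: (W S A B) => H; prep; feed H.
move: H => /(_ x j i) H; feed H.
unf; rewrite /a1a2_comp /a2a1_comp /a'_comp /a''_comp in H.
simpl_ifs_in H; rewrite !subr0 in H.
move/(congr1 E): H => H; push_E_in H.
apply: E_inj; push_E; use H.
Qed.

Lemma to_c : is_Wrep a -> cond_c alpha omega.
Proof.
move=> W S A B hAS hBS dAB j hjB x.
have [f hf] := fresh S.
move: (W (f |` S) A (f |` B)) => H; prep; feed H.
move: H => /(_ (castM x) j f) H; feed H.
rewrite /a1a2_comp /a2a1_comp /a'_comp /a''_comp in H.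
simpl_ifs_in H; rewrite !subr0 in H.
move/(congr1 E): H => H; push_E_in H.
apply: E_inj; push_E; use H.
Qed.

Lemma to_aa : is_Wrep a -> Defs.commute (alpha_fam alpha) alpha_dom (alpha_fam alpha) alpha_dom.
Proof.
move=> W S A B C D hAS hBS hCS hDS dAB dAC dAD dBC dBD dCD dA dC x.
case/cardfs1P: dA => p ?; subst A; case/cardfs1P: dC => c ?; subst C.
rewrite /alpha_fam !hd1.
move: (W S D B) => H; prep; feed H.
move: H => /(_ x c p) H; feed H.
rewrite /a1a2_comp /a2a1_comp /a'_comp /a''_comp in H.
simpl_ifs_in H; move/eqP: H; rewrite subr0 subr_eq0 => /eqP H.
move/(congr1 E): H => H; push_E_in H.
apply: E_inj; push_E; use H.
Qed.

Lemma to_oo : is_Wrep a -> Defs.commute (omega_fam omega) omega_dom (omega_fam omega) omega_dom.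
Proof.
move=> W S A B C D hAS hBS hCS hDS dAB dAC dAD dBC dBD dCD dA dC x.
move/eqP: dA => ?; subst A; move/eqP: dC => ?; subst C.
rewrite /omega_fam.
have [i hi] := fresh S; have [j hj] := fresh (i |` S).
move: (W (i |` (j |` S)) (i |` D) (j |` B)) => H; prep; feed H.
move: H => /(_ (castM x) i j) H; feed H.
rewrite /a1a2_comp /a2a1_comp /a'_comp /a''_comp in H.
simpl_ifs_in H; move/eqP: H; rewrite subr0 subr_eq0 => /eqP H.
move/(congr1 E): H => H; push_E_in H.
apply: E_inj; push_E; use H.
Qed.

Lemma to_ao : is_Wrep a -> Defs.commute (alpha_fam alpha) alpha_dom (omega_fam omega) omega_dom.
Proof.
move=> W S A B C D hAS hBS hCS hDS dAB dAC dAD dBC dBD dCD dA dC x.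
case/cardfs1P: dA => p ?; subst A; move/eqP: dC => ?; subst C.
rewrite /alpha_fam /omega_fam !hd1.
have [i hi] := fresh S.
move: (W (i |` S) (i |` D) B) => H; prep; feed H.
move: H => /(_ (castM x) i p) H; feed H.
rewrite /a1a2_comp /a2a1_comp /a'_comp /a''_comp in H.
simpl_ifs_in H; move/eqP: H; rewrite subr0 subr_eq0 => /eqP H.
move/(congr1 E): H => H; push_E_in H.
apply: E_inj; push_E; use H.
Qed.
Lemma w1 S A B (x : M ((S `\` A) `\` B)) i j :
  cond_a alpha omega -> cond_b alpha -> cond_c alpha omega ->
  A `<=` S -> B `<=` S -> A `&` B = fset0 -> i \in S -> j \in S -> i != j ->
  i \in A -> j \in A ->
  a1a2_comp k M a x i j - a2a1_comp k M a x i j = a'_comp k M a x i j - a''_comp k M a x i j.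
Proof.
move=> [caa coo cao] cb cc hAS hBS dAB hi hj hij hI hJ; prep.
unf; simpl_ifs.
rewrite !sub0r; apply/eqP; rewrite eqr_opp; apply/eqP.
move: (cc (S `\ i) B (A `\ i)) => H; feed H; move: {H}(H j) => H; feed H; move: {H}(H (castM x)) => H.
move/(congr1 E): H => H; rewrite /alpha_fam /omega_fam ?hd1 in H; push_E_in H.
apply: E_inj; push_E; use H.
Qed.

Lemma w2 S A B (x : M ((S `\` A) `\` B)) i j :
  cond_a alpha omega -> cond_b alpha -> cond_c alpha omega ->
  A `<=` S -> B `<=` S -> A `&` B = fset0 -> i \in S -> j \in S -> i != j ->
  i \in A -> j \in B ->
  a1a2_comp k M a x i j - a2a1_comp k M a x i j = a'_comp k M a x i j - a''_comp k M a x i j.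
Proof.
move=> [caa coo cao] cb cc hAS hBS dAB hi hj hij hI hJ; prep.
unf; simpl_ifs.
rewrite subr0; apply/eqP; rewrite subr_eq0; apply/eqP.
move: (coo ((S `\ i) `\ j) fset0 (B `\ j) fset0 (A `\ i)) => H; feed H; move: {H}(H (castM x)) => H.
move/(congr1 E): H => H; rewrite /alpha_fam /omega_fam ?hd1 in H; push_E_in H.
apply: E_inj; push_E; use H.
Qed.

Lemma w3 S A B (x : M ((S `\` A) `\` B)) i j :
  cond_a alpha omega -> cond_b alpha -> cond_c alpha omega ->
  A `<=` S -> B `<=` S -> A `&` B = fset0 -> i \in S -> j \in S -> i != j ->
  i \in A -> j \notin A `|` B ->
  a1a2_comp k M a x i j - a2a1_comp k M a x i j = a'_comp k M a x i j - a''_comp k M a x i j.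
Proof.
move=> [caa coo cao] cb cc hAS hBS dAB hi hj hij hI hJ; prep.
unf; simpl_ifs.
rewrite subr0; apply/eqP; rewrite subr_eq0; apply/eqP.
move: (cao (S `\ i) [fset j] B fset0 (A `\ i)) => H; feed H; move: {H}(H (castM x)) => H.
move/(congr1 E): H => H; rewrite /alpha_fam /omega_fam ?hd1 in H; push_E_in H.
apply: E_inj; push_E; use H.
Qed.

Lemma w5 S A B (x : M ((S `\` A) `\` B)) i j :
  cond_a alpha omega -> cond_b alpha -> cond_c alpha omega ->
  A `<=` S -> B `<=` S -> A `&` B = fset0 -> i \in S -> j \in S -> i != j ->
  i \in B -> j \in B ->
  a1a2_comp k M a x i j - a2a1_comp k M a x i j = a'_comp k M a x i j - a''_comp k M a x i j.
Proof.
move=> [caa coo cao] cb cc hAS hBS dAB hi hj hij hI hJ; prep.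
unf; simpl_ifs.
rewrite !subr0.
move: (cc (S `\ j) A (B `\ j)) => H; feed H; move: {H}(H i) => H; feed H; move: {H}(H (castM x)) => H.
move/(congr1 E): H => H; rewrite /alpha_fam /omega_fam ?hd1 in H; push_E_in H.
apply: E_inj; push_E; use H.
Qed.

Lemma w6 S A B (x : M ((S `\` A) `\` B)) i j :
  cond_a alpha omega -> cond_b alpha -> cond_c alpha omega ->
  A `<=` S -> B `<=` S -> A `&` B = fset0 -> i \in S -> j \in S -> i != j ->
  i \in B -> j \notin A `|` B ->
  a1a2_comp k M a x i j - a2a1_comp k M a x i j = a'_comp k M a x i j - a''_comp k M a x i j.
Proof.
move=> [caa coo cao] cb cc hAS hBS dAB hi hj hij hI hJ; prep.
unf; simpl_ifs.
rewrite !subr0.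
move: (cb S A B) => H; feed H; move: {H}(H i j) => H; feed H; move: {H}(H (castM x)) => H.
move/(congr1 E): H => H; rewrite /alpha_fam /omega_fam ?hd1 in H; push_E_in H.
apply: E_inj; push_E; use H.
Qed.

Lemma w7 S A B (x : M ((S `\` A) `\` B)) i j :
  cond_a alpha omega -> cond_b alpha -> cond_c alpha omega ->
  A `<=` S -> B `<=` S -> A `&` B = fset0 -> i \in S -> j \in S -> i != j ->
  i \notin A `|` B -> j \in A ->
  a1a2_comp k M a x i j - a2a1_comp k M a x i j = a'_comp k M a x i j - a''_comp k M a x i j.
Proof.
move=> [caa coo cao] cb cc hAS hBS dAB hi hj hij hI hJ; prep.
unf; simpl_ifs.
rewrite !sub0r; apply/eqP; rewrite eqr_opp; apply/eqP.
move: (cb S B A) => H; feed H; move: {H}(H j i) => H; feed H; move: {H}(H (castM x)) => H.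
move/(congr1 E): H => H; rewrite /alpha_fam /omega_fam ?hd1 in H; push_E_in H.
apply: E_inj; push_E; use H.
Qed.

Lemma w8 S A B (x : M ((S `\` A) `\` B)) i j :
  cond_a alpha omega -> cond_b alpha -> cond_c alpha omega ->
  A `<=` S -> B `<=` S -> A `&` B = fset0 -> i \in S -> j \in S -> i != j ->
  i \notin A `|` B -> j \in B ->
  a1a2_comp k M a x i j - a2a1_comp k M a x i j = a'_comp k M a x i j - a''_comp k M a x i j.
Proof.
move=> [caa coo cao] cb cc hAS hBS dAB hi hj hij hI hJ; prep.
unf; simpl_ifs.
rewrite subr0; apply/eqP; rewrite subr_eq0; apply/eqP.
move: (cao (S `\ j) [fset i] A fset0 (B `\ j)) => H; feed H; move: {H}(H (castM x)) => H.
move/(congr1 E): H => H; rewrite /alpha_fam /omega_fam ?hd1 in H; push_E_in H.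
apply: E_inj; push_E; use H.
Qed.

Lemma w9 S A B (x : M ((S `\` A) `\` B)) i j :
  cond_a alpha omega -> cond_b alpha -> cond_c alpha omega ->
  A `<=` S -> B `<=` S -> A `&` B = fset0 -> i \in S -> j \in S -> i != j ->
  i \notin A `|` B -> j \notin A `|` B ->
  a1a2_comp k M a x i j - a2a1_comp k M a x i j = a'_comp k M a x i j - a''_comp k M a x i j.
Proof.
move=> [caa coo cao] cb cc hAS hBS dAB hi hj hij hI hJ; prep.
unf; simpl_ifs.
rewrite subr0; apply/eqP; rewrite subr_eq0; apply/eqP.
move: (caa S [fset j] B [fset i] A) => H; feed H; move: {H}(H (castM x)) => H.
move/(congr1 E): H => H; rewrite /alpha_fam /omega_fam ?hd1 in H; push_E_in H.
apply: E_inj; push_E; use H.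
Qed.

Lemma w4 S A B (x : M ((S `\` A) `\` B)) i j :
  cond_a alpha omega -> cond_b alpha -> cond_c alpha omega ->
  A `<=` S -> B `<=` S -> A `&` B = fset0 -> i \in S -> j \in S -> i != j ->
  i \in B -> j \in A ->
  a1a2_comp k M a x i j - a2a1_comp k M a x i j = a'_comp k M a x i j - a''_comp k M a x i j.
Proof.
move=> [caa coo cao] cb cc hAS hBS dAB hi hj hij hI hJ; prep.
unf; simpl_ifs.
rewrite subr0; apply/eqP; rewrite eq_sym subr_eq0; apply/eqP.
apply: E_inj; push_E; tree_eq.
Qed.

End Main.

Theorem proposition6p6 (k : comPzRingType) (M : {fset nat} -> lmodType k)
    (actM : forall (X Y : {fset nat}), (nat -> nat) -> M X -> M Y)
    (a : coefmap M) (alpha : alpha_type M) (omega : omega_type M) :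
  is_FBmodule actM -> is_FBmap actM a -> decomposes a alpha omega ->
  (is_Wrep a <-> [/\ cond_a alpha omega, cond_b alpha & cond_c alpha omega]).
Proof.
move=> _ _ dec; split.
  move=> W; split; [split| |].
  - by eapply to_aa; eauto.
  - by eapply to_oo; eauto.
  - by eapply to_ao; eauto.
  - by eapply to_b; eauto.
  - by eapply to_c; eauto.
move=> [ca cb cc] S A B hAS hBS dAB x i j hi hj hij.
have cls : forall p, p \in S -> [\/ p \in A, p \in B | p \notin A `|` B].
  move=> p _; case: (boolP (p \in A)) => hA; first by constructor 1.
  case: (boolP (p \in B)) => hB; first by constructor 2.
  by constructor 3; rewrite inE negb_or hA hB.
case: (cls i hi) => hI; case: (cls j hj) => hJ;
  [eapply w1|eapply w2|eapply w3|eapply w4|eapply w5|eapply w6|eapply w7|eapply w8|eapply w9]; eauto.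
Qed.
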